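(* For all integers $t\ge 2$, $\ell\ge2$ and $1\le r\le \ell$ satisfying $\ell<r(r+1)$, the braid graph $B_t=B(\ell,r,t)$ satisfies $m_{B_t}=d_{B_t}$.
   Context: For a graph $G$ with $v_G>1$ vertices and $e_G$ edges, its density is $d_G=\frac{e_G}{v_G-1}$ and its maximum density is $m_G=\max\{d_H: H\subseteq G,\ v_H>1\}$. Two sequences of vertices $(v_1,\dots,v_r)$ and $(u_1,\dots,u_r)$ form an $r$-bridge if for each $i=1,\dots,r$ the vertex $v_i$ is adjacent to all of $u_1,\dots,u_i$. For $t\ge1$, $\ell\ge2$, $1\le r\le\ell$, the braid graph $B(\ell,r,t)$ consists of $t$ vertex-disjoint $\ell$-cliques $K^{(1)}_\ell,\dots,K^{(t)}_\ell$, each with its vertices linearly ordered, where for each $i=1,\dots,t-1$ the last $r$ vertices of $K^{(i)}_\ell$ (in order, as $(v_1,\dots,v_r)$) and the first $r$ vertices of $K^{(i+1)}_\ell$ (in order, as $(u_1,\dots,u_r)$) form an $r$-bridge, and there are no other edges. Thus $d_{B_t}=\frac{t\binom{\ell}{2}+(t-1)\binom{r+1}{2}}{t\ell-1}$. *)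

(* Defs.v *)
From HB Require Import structures.
From mathcomp Require Import all_boot all_order all_algebra.
Set Implicit Arguments. Unset Strict Implicit. Unset Printing Implicit Defensive.
Import Order.TTheory GRing.Theory Num.Theory.
Local Open Scope ring_scope.

(* A simple graph on a finite vertex type T is given by a symmetric,
   irreflexive adjacency relation adj.  Its edge set is the set of
   2-element vertex sets {x,y} with adj x y. *)
Definition edges (T : finType) (adj : rel T) : {set {set T}} :=
  [set e : {set T} | [exists x : T, exists y : T, adj x y && (e == [set x; y])]].

Definition is_subgraph (T : finType) (adj : rel T) (S : {set T}) (F : {set {set T}}) : bool :=
  (F \subset edges adj) && [forall e in F, e \subset S].

Definition density (T : finType) (S : {set T}) (F : {set {set T}}) : rat :=
  (#|F|%:R) / ((#|S|.-1)%:R).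

Definition density_graph (T : finType) (adj : rel T) : rat :=
  density [set: T] (edges adj).

(* maximum density m_G = max { d_H : H subgraph of G, v_H > 1 }.
   (All densities are >= 0, so 0 is a neutral start for the max.) *)
Definition max_density (T : finType) (adj : rel T) : rat :=
  \big[Num.max/0]_(H : {set T} * {set {set T}} |
        is_subgraph adj H.1 H.2 && (1 < #|H.1|)%N) density H.1 H.2.

(* Braid graph B(l, r, t): vertices (i, a), i < t the clique index,
   a < l the position in the linear order of clique K^(i) (0-based).
   Bridge between K^(i) and K^(i+1): v_k = (i, l-r+k-1), u_j = (i+1, j-1),
   v_k ~ u_j iff j <= k, i.e. (0-based positions p, q): q + l <= p + r. *)
Definition braid_bridge (l r t : nat) (x y : 'I_t * 'I_l) : bool :=
  ((x.1 : nat).+1 == y.1) && (y.2 + l <= x.2 + r)%N.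

Arguments braid_bridge : clear implicits.

Definition braid_adj (l r t : nat) : rel ('I_t * 'I_l) :=
  fun x y =>
    [|| (x.1 == y.1) && (x.2 != y.2), braid_bridge l r t x y | braid_bridge l r t y x].

Arguments braid_adj : clear implicits.

(* Main.v *)
Require Import Defs.
From HB Require Import structures.
From mathcomp Require Import all_boot all_order all_algebra.
From mathcomp Require Import zify ring lra.
Set Implicit Arguments. Unset Strict Implicit. Unset Printing Implicit Defensive.
Import Order.TTheory GRing.Theory Num.Theory.

Lemma adjC t l r (x y : 'I_t * 'I_l) : braid_adj l r t x y = braid_adj l r t y x.
Proof.
rewrite /braid_adj; case: x => [a b]; case: y => [c d] /=.
by rewrite (eq_sym c) (eq_sym d); case: (_ && _) => //=; rewrite orbC.
Qed.

Lemma adj_irr t l r (x : 'I_t * 'I_l) : braid_adj l r t x x = false.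
Proof.
by rewrite /braid_adj /braid_bridge !eqxx /= eqn_leq ltnn.
Qed.

Definition eS t l r (S : {set 'I_t * 'I_l}) :=
  #|[set e in edges (braid_adj l r t) | e \subset S]|.

Definition nb t l r (S : {set 'I_t * 'I_l}) z :=
  [set u in S | braid_adj l r t z u].

Lemma in_edges (T : finType) (adj : rel T) e :
  (e \in edges adj) = [exists x, exists y, adj x y && (e == [set x; y])].
Proof. by rewrite inE. Qed.

Lemma eS_add t l r (S : {set 'I_t * 'I_l}) z : z \notin S ->
  eS r (z |: S) = (eS r S + #|nb r S z|)%N.
Proof.
move=> zS; rewrite /eS.
set E1 := [set e in edges (braid_adj l r t) | e \subset S].
set I := [set [set z; u] | u in nb r S z].
have -> : [set e in edges (braid_adj l r t) | e \subset z |: S] = E1 :|: I.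
  apply/setP => e; rewrite !inE; apply/idP/idP.
  - case/andP => /existsP[x /existsP[y /andP[axy /eqP ->]]] sub.
    have xin : x \in z |: S by apply: (subsetP sub); rewrite !inE eqxx.
    have yin : y \in z |: S by apply: (subsetP sub); rewrite !inE eqxx orbT.
    case: (eqVneq x z) => [exz|nxz].
      subst x; apply/orP; right; apply/imsetP; exists y => //.
      rewrite !inE axy andbT; move: yin; rewrite !inE; case/orP=> // /eqP eyz.
      by subst y; rewrite adj_irr in axy.
    case: (eqVneq y z) => [eyz|nyz].
      subst y; apply/orP; right; apply/imsetP; exists x; last by rewrite setUC.
      rewrite !inE adjC axy andbT; move: xin; rewrite !inE (negPf nxz) //.
    apply/orP; left; apply/andP; split.
      by apply/existsP; exists x; apply/existsP; exists y; rewrite axy eqxx.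
    apply/subsetP => w; rewrite !inE => /orP[] /eqP ->.
      by move: xin; rewrite !inE (negPf nxz).
    by move: yin; rewrite !inE (negPf nyz).
  - case/orP => [/andP[He sub]|/imsetP[u]].
      rewrite He /=; apply: (subset_trans sub); exact: subsetUr.
    rewrite !inE => /andP[uS azu] ->; apply/andP; split.
      by apply/existsP; exists z; apply/existsP; exists u; rewrite azu eqxx.
    apply/subsetP => w; rewrite !inE => /orP[] /eqP ->; first by rewrite eqxx.
    by rewrite uS orbT.
rewrite cardsU.
have -> : E1 :&: I = set0.
  apply/setP => e; rewrite !inE; apply/negbTE; apply/negP => /andP[/andP[_ sub] /imsetP[u _ Heu]].
  by move/negP: zS; apply; apply: (subsetP sub); rewrite Heu !inE eqxx.
rewrite cards0 subn0 card_in_imset //.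
move=> u1 u2; rewrite !inE => /andP[u1S _] /andP[u2S _] H.
have : u1 \in [set z; u2] by rewrite -H !inE eqxx orbT.
rewrite !inE => /orP[/eqP e1|/eqP //].
by subst u1; rewrite u1S in zS.
Qed.

Lemma adjE t l r (x y : 'I_t * 'I_l) : braid_adj l r t x y =
  [|| (val x.1 == val y.1) && (val x.2 != val y.2),
      ((val x.1).+1 == val y.1) && (val y.2 + l <= val x.2 + r)
    | ((val y.1).+1 == val x.1) && (val x.2 + l <= val y.2 + r)].
Proof. by []. Qed.

Lemma pair_eqn t l (x y : 'I_t * 'I_l) :
  val x.1 = val y.1 -> val x.2 = val y.2 -> x = y.
Proof.
case: x => a b; case: y => c d /= h1 h2.
by rewrite (val_inj h1) (val_inj h2).
Qed.

Lemma X_char t l r (S : {set 'I_t * 'I_l}) (z z' u : 'I_t * 'I_l) :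
  u \in S -> z \notin S -> val z.1 = val z'.1 ->
  (val z.2).+1 = val z'.2 \/ (val z'.2).+1 = val z.2 ->
  braid_adj l r t z' u -> ~~ braid_adj l r t z u ->
  (val u.1 = (val z.1).+1 /\ val u.2 + l = val z'.2 + r /\ val z'.2 = (val z.2).+1) \/
  ((val u.1).+1 = val z.1 /\ val z'.2 + l = val u.2 + r /\ val z.2 = (val z'.2).+1).
Proof.
move=> uS zS e1 hp; rewrite !adjE.
have uz : u != z by apply: contraNneq zS => <-.
have uz' : ~ (val u.1 = val z.1 /\ val u.2 = val z.2).
  by case=> h1 h2; move/eqP: uz; apply; apply: pair_eqn.
case/or3P => [/andP[/eqP a1 /eqP a2]|/andP[/eqP a1 a2]|/andP[/eqP a1 a2]];
  rewrite !negb_or !negb_and => H.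
- move: H => /and3P[/orP[h|h] _ _].
  + move/eqP: h; lia.
  + exfalso; apply: uz'; move: h; rewrite negbK => /eqP h; lia.
- move: H => /and3P[_ /orP[/eqP h|h] _]; [lia|]; move: h; rewrite -ltnNge => h. lia.
- move: H => /and3P[_ _ /orP[/eqP h|h]]; [lia|]; move: h; rewrite -ltnNge => h. lia.
Qed.

Lemma nb_shift t l r (S : {set 'I_t * 'I_l}) (z z' : 'I_t * 'I_l) :
  z' \in S -> z \notin S -> val z.1 = val z'.1 ->
  (val z.2).+1 = val z'.2 \/ (val z'.2).+1 = val z.2 ->
  #|nb r (S :\ z') z'| <= #|nb r S z|.
Proof.
move=> z'S zS e1 hp.
set N := nb r S z; set A := nb r (S :\ z') z'.
set X := [set u in A | ~~ braid_adj l r t z u].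
have z'N : z' \in N.
  rewrite inE z'S adjE; apply/orP; left; apply/andP; split; apply/eqP; lia.
have sub : A \subset (N :\ z') :|: X.
  apply/subsetP => u; rewrite !inE => /andP[/andP[uz' uS] a].
  case: (boolP (braid_adj l r t z u)) => H; by rewrite ?uz' ?uS ?a ?H.
have X1 : #|X| <= 1.
  apply/card_le1_eqP => u1 u2; rewrite !inE.
  move=> /andP[/andP[/andP[_ u1S] a1] n1] /andP[/andP[/andP[_ u2S] a2] n2].
  have := X_char u1S zS e1 hp a1 n1; have := X_char u2S zS e1 hp a2 n2.
  move=> h2 h1; apply: pair_eqn; lia.
have := subset_leq_card sub; rewrite cardsU => h.
have := cardsD1 z' N; rewrite z'N add1n => hN.
apply: (leq_trans h); rewrite hN -addn1; apply: (leq_trans (leq_subr _ _)); by rewrite leq_add2l.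
Qed.

Definition key t l (v : 'I_t * 'I_l) := (val v.1 * l + val v.2)%N.

Lemma key_inj t l : injective (@key t l).
Proof.
move=> [a b] [c d]; rewrite /key /= => H.
have l0 : 0 < l by apply: (leq_ltn_trans (leq0n b)); exact: ltn_ord.
have := congr1 (fun n => n %/ l) H; have := congr1 (fun n => n %% l) H.
rewrite !divnMDl // !modnMDl !divn_small // !modn_small // !addn0 => h2 h1.
by rewrite (val_inj h1) (val_inj h2).
Qed.

Definition bd t l r (S : {set 'I_t * 'I_l}) v :=
  #|[set u in S | braid_adj l r t u v && (key u < key v)]|.

Lemma eS0 t l r : eS r (set0 : {set 'I_t * 'I_l}) = 0.
Proof.
apply/eqP; rewrite cards_eq0; apply/eqP/setP => e; rewrite !inE.
apply/negbTE/negP => /andP[/existsP[x /existsP[y /andP[_ /eqP ->]]]] /subsetP H.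
by have := H x; rewrite !inE eqxx => /(_ isT).
Qed.

Lemma eS_sum t l r (S : {set 'I_t * 'I_l}) : eS r S = \sum_(v in S) bd r S v.
Proof.
have [n] := ubnP #|S|; elim: n S => // n IH S.
case: (set_0Vmem S) => [->|[x0 x0S]] hS.
  by rewrite eS0 big_set0.
case: (@arg_maxnP _ x0 (mem S) (@key t l) x0S) => v vS vmax.
have {}vS : v \in S := vS.
have vS' : v \notin S :\ v by rewrite !inE eqxx.
rewrite -{1}(setD1K vS) eS_add // IH; last by move: hS; rewrite (cardsD1 v) vS.
rewrite (big_setD1 _ vS) addnC; congr (_ + _).
  apply: eq_card => u; rewrite !inE.
  case: (eqVneq u v) => [->|uv] /=; first by rewrite adj_irr !andbF.
  rewrite adjC; case uS: (u \in S); rewrite ?andbF //=.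
  case: (braid_adj _ _ _ u v) => //=.
  have : key u <= key v := vmax u uS; rewrite leq_eqVlt => /orP[/eqP/key_inj e|->//].
  by rewrite e eqxx in uv.
apply: eq_bigr => u; rewrite !inE => /andP[uv uS].
apply: eq_card => w; rewrite !inE.
case: (eqVneq w v) => [->|wv] /=; last by [].
have : key u <= key v := vmax u uS.
by rewrite ltnNge => ->; rewrite !andbF.
Qed.

Lemma card_ge (l a : nat) : #|[set q : 'I_l | a <= val q]| = l - a.
Proof.
elim: a => [|a IH].
  rewrite subn0 -[RHS]card_ord -cardsT; apply: eq_card => q; by rewrite !inE.
case: (ltnP a l) => h.
  have e : [set q : 'I_l | a <= val q] = Ordinal h |: [set q : 'I_l | a.+1 <= val q].
    apply/setP => q; rewrite !inE -val_eqE /= leq_eqVlt (eq_sym a); done.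
  move: IH; rewrite e cardsU1 !inE /= ltnn /= add1n => IH.
  lia.
have -> : [set q : 'I_l | a.+1 <= val q] = set0.
  apply/setP => q; rewrite !inE; apply/negbTE; rewrite -ltnNge.
  by apply: (leq_trans (ltn_ord q)); apply: (leq_trans h).
by rewrite cards0; lia.
Qed.

Lemma card_lt (l p : nat) : p <= l -> #|[set q : 'I_l | val q < p]| = p.
Proof.
move=> pl.
have := cardsC [set q : 'I_l | p <= val q]; rewrite card_ord card_ge.
have -> : ~: [set q : 'I_l | p <= val q] = [set q : 'I_l | val q < p].
  by apply/setP => q; rewrite !inE ltnNge.
lia.
Qed.

Lemma card_br (l r p : nat) : r <= l ->
  #|[set q : 'I_l | p + l <= val q + r]| = r - p.
Proof.
move=> rl.
have -> : [set q : 'I_l | p + l <= val q + r] = [set q : 'I_l | p + l - r <= val q].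
  apply/setP => q; rewrite !inE; apply/idP/idP; lia.
rewrite card_ge; lia.
Qed.

Definition prevs t (I : {set 'I_t}) (i : 'I_t) := [set j in I | (val j).+1 == val i].

Lemma prevs_le1 t (I : {set 'I_t}) i : #|prevs I i| <= 1.
Proof.
apply/card_le1_eqP => j1 j2; rewrite !inE => /andP[_ /eqP h1] /andP[_ /eqP h2].
apply: val_inj; lia.
Qed.

Lemma bd_U t l r (I : {set 'I_t}) (v : 'I_t * 'I_l) : v.1 \in I -> r <= l ->
  bd r (setX I setT) v = (val v.2 + #|prevs I v.1| * (r - val v.2))%N.
Proof.
move=> vI rl; rewrite /bd.
set Qa := [set q : 'I_l | val q < val v.2].
set Qb := [set q : 'I_l | val v.2 + l <= val q + r].
have -> : [set u in setX I setT | braid_adj l r t u v && (key u < key v)] =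
          setX [set v.1] Qa :|: setX (prevs I v.1) Qb.
  apply/setP => -[a b]; rewrite !inE adjE /key /=.
  case: v vI {Qa Qb} => [c d] /= cI.
  case: (eqVneq a c) => [eac|ac] /=.
    subst c; rewrite cI !eqxx /=.
    have hF : forall n : nat, (n.+1 == n) = false by move=> n; lia.
    rewrite !hF /= ?andbF ?orbF ltn_add2l.
    by rewrite neq_ltn; case: ltngtP.
  have ac' : (val a == val c) = false by rewrite val_eqE; exact: negPf ac.
  rewrite ac' /=.
  have k1 : (val a).+1 = val c -> val a * l + val b < val c * l + val d.
    by move=> e; rewrite -e mulSn; have hb : val b < l := ltn_ord b; lia.
  have k2 : (val c).+1 = val a -> val c * l + val d < val a * l + val b.
    by move=> e; rewrite -e mulSn; have hd : val d < l := ltn_ord d; lia.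
  case: (a \in I); rewrite /= ?andbF //.
  case: (eqVneq (val a).+1 (val c)) => [e|ne] /=.
    rewrite k1 // andbT.
    have -> : ((val c).+1 == val a) = false by apply/eqP; lia.
    by rewrite andFb orbF.
  case: (eqVneq (val c).+1 (val a)) => [e|ne2] //=.
  by rewrite ltnNge (ltnW (k2 e)) andbF.
rewrite cardsU.
have -> : setX [set v.1] Qa :&: setX (prevs I v.1) Qb = set0.
  apply/setP => -[a b]; rewrite !inE /=; apply/negbTE.
  apply/negP => /andP[/andP[/eqP -> _] /andP[/andP[_ /eqP h] _]]; lia.
rewrite cards0 subn0 !cardsX cards1 mul1n.
rewrite /Qa /Qb card_br // card_lt //.
exact: ltnW (ltn_ord v.2).
Qed.

Lemma sumA n : (\sum_(q < n) (q : nat)) * 2 = n * n.-1.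
Proof.
elim: n => [|n IH]; first by rewrite big_ord0.
rewrite big_ord_recr /= mulnDl IH; case: n {IH} => //= n; nia.
Qed.

Lemma sumB n r : (\sum_(q < n) (r - q)) * 2 + (r - n) * (r - n).+1 = r * r.+1.
Proof.
elim: n => [|n IH]; first by rewrite big_ord0 subn0.
rewrite big_ord_recr /= mulnDl -IH.
have -> : r - n.+1 = (r - n).-1 by lia.
case: (r - n) => [|d] /=; nia.
Qed.

Lemma eS_U t l r (I : {set 'I_t}) : r <= l ->
  eS r (setX I [set: 'I_l]) =
  (#|I| * (\sum_(q < l) (q : nat)) + (\sum_(i in I) #|prevs I i|) * \sum_(q < l) (r - q))%N.
Proof.
move=> rl; rewrite eS_sum.
rewrite (eq_bigr (fun v => val v.2 + #|prevs I v.1| * (r - val v.2))%N); last first.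
  move=> v; rewrite !inE andbT => vI; exact: bd_U.
transitivity (\sum_(i in I) \sum_(q < l) (val q + #|prevs I i| * (r - val q)))%N.
  rewrite pair_big_dep; apply: eq_bigl => v; by rewrite !inE andbT.
rewrite (eq_bigr (fun i => \sum_(q < l) (q : nat) + #|prevs I i| * \sum_(q < l) (r - q))%N); last first.
  by move=> i _; rewrite big_split /= big_distrr.
by rewrite big_split /= sum_nat_const big_distrl.
Qed.

Lemma prevs_sum_le t (I : {set 'I_t}) (i0 : 'I_t) : i0 \in I ->
  (\sum_(i in I) #|prevs I i| <= #|I| - 1)%N.
Proof.
move=> i0I.
case: (@arg_minnP _ i0 (mem I) (fun i : 'I_t => val i) i0I) => m mI mmin.
have mI' : m \in I := mI.
rewrite (big_setD1 _ mI').
have -> : prevs I m = set0.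
  apply/setP => j; rewrite !inE; apply/negbTE/negP => /andP[jI /eqP h].
  have /= := mmin j jI; move: h => /= h; lia.
rewrite cards0 /= add0n (cardsD1 m I) mI' add1n subSS.
rewrite subn0 -sum1_card; apply: leq_sum => i _; exact: prevs_le1.
Qed.

Lemma prevs_sum_T t : (\sum_(i in [set: 'I_t]) #|prevs [set: 'I_t] i|)%N = t.-1.
Proof.
case: t => [|t]; first by rewrite big_pred0 // => i; case: i.
rewrite (eq_bigl xpredT); last by move=> i; rewrite inE.
rewrite big_ord_recl /=.
have -> : prevs [set: 'I_t.+1] ord0 = set0.
  by apply/setP => j; rewrite !inE.
rewrite cards0 add0n -[RHS](card_ord t) -sum1_card.
apply: eq_bigr => i _.
apply/eqP; rewrite eqn_leq prevs_le1 card_gt0; apply/set0Pn.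
exists (inord i); rewrite !inE /= inordK ?lift0 //.
exact: leqW (ltn_ord i).
Qed.

Local Open Scope ring_scope.

Lemma num_ineq (t l k SA SB P : nat) : (1 <= k <= t)%N -> (2 <= l)%N ->
  (SA * 2 = l * l.-1)%N -> (l <= SB * 2)%N -> (P <= k - 1)%N ->
  forall D : rat, D = (t * SA + (t - 1) * SB)%N%:R / ((t * l).-1)%N%:R ->
  D <= D * (k * l)%N%:R - (k * SA + P * SB)%N%:R.
Proof.
move=> /andP[k1 kt] l2 hA hB hP D ->.
have t1 : (1 <= t)%N by apply: leq_trans kt.
have N0 : (0 < (t * l).-1)%N by rewrite -subn1 subn_gt0; nia.
have eN : ((t * l).-1)%N%:R = (t%:R * l%:R - 1 : rat).
  by rewrite -subn1 natrB ?muln_gt0 ?natrM //; nia.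
have eT : ((t - 1)%N%:R : rat) = t%:R - 1 by rewrite natrB.
have eK : ((k - 1)%N%:R : rat) = k%:R - 1 by rewrite natrB.
have hA' : (SA%:R * 2 : rat) = l%:R * (l%:R - 1).
  have := congr1 (fun n => n%:R : rat) hA; rewrite /= natrM -subn1 natrM natrB //; lia.
have hB' : (l%:R : rat) <= SB%:R * 2 by rewrite -(natrM _ SB 2) ler_nat.
have hP' : (P%:R : rat) <= k%:R - 1 by rewrite -eK ler_nat.
have kt' : (k%:R : rat) <= t%:R by rewrite ler_nat.
have k1' : (1 : rat) <= k%:R by rewrite ler1n.
have l2' : (2 : rat) <= l%:R by rewrite ler_nat.
have Np : (0 : rat) < t%:R * l%:R - 1 by rewrite -eN ltr0n.
rewrite eN !natrD !natrM eT.
set E := (t%:R * SA%:R + (t%:R - 1) * SB%:R : rat).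
rewrite -subr_ge0.
have -> : E / (t%:R * l%:R - 1) * (k%:R * l%:R) - (k%:R * SA%:R + P%:R * SB%:R) -
   E / (t%:R * l%:R - 1) =
   (E * (k%:R * l%:R - 1) - (k%:R * SA%:R + P%:R * SB%:R) * (t%:R * l%:R - 1)) /
   (t%:R * l%:R - 1).
  by field; apply/eqP => h; rewrite h ltxx in Np.
apply: divr_ge0; last exact: ltW.
have SB0 : (0 : rat) <= SB%:R by [].
have e1 : E * (k%:R * l%:R - 1) - (k%:R * SA%:R + (k%:R - 1) * SB%:R) * (t%:R * l%:R - 1)
   = (t%:R - k%:R) * ((l%:R - 1) * SB%:R - SA%:R) by rewrite /E; ring.
have e2 : ((l%:R - 1) * SB%:R - SA%:R) * 2 = (l%:R - 1) * (SB%:R * 2 - l%:R) :> rat.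
  by rewrite mulrBl hA'; ring.
have h3 : (0 : rat) <= (l%:R - 1) * SB%:R - SA%:R.
  have : (0 : rat) <= (l%:R - 1) * (SB%:R * 2 - l%:R) by apply: mulr_ge0; lra.
  rewrite -e2; lra.
have h4 : (0 : rat) <= (t%:R - k%:R) * ((l%:R - 1) * SB%:R - SA%:R) by apply: mulr_ge0; lra.
have h5 : P%:R * SB%:R * (t%:R * l%:R - 1) <= (k%:R - 1) * SB%:R * (t%:R * l%:R - 1) :> rat.
  by apply: ler_pM => //; [apply: mulr_ge0 => //| apply: ltW | apply: ler_pM].
nra.
Qed.

Local Open Scope ring_scope.

Definition Dv t l r : rat := density_graph (braid_adj l r t).

Definition W t l r (S : {set 'I_t * 'I_l}) : rat :=
  Dv t l r * #|S|%:R - (eS r S)%:R.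

Lemma W_add t l r (S : {set 'I_t * 'I_l}) z : z \notin S ->
  W r (z |: S) = W r S + Dv t l r - (#|nb r S z|)%:R.
Proof.
move=> zS; rewrite /W eS_add // cardsU1 zS add1n -addn1 !natrD; ring.
Qed.

Lemma eS_T t l r : eS r [set: 'I_t * 'I_l] = #|edges (braid_adj l r t)|.
Proof.
by rewrite /eS; apply: eq_card => e; rewrite !inE subsetT andbT.
Qed.

Lemma Dv_E t l r : (0 < t)%N -> (r <= l)%N ->
  Dv t l r = (t * (\sum_(q < l) (q : nat)) + (t - 1) * \sum_(q < l) (r - q))%N%:R
             / ((t * l).-1)%N%:R.
Proof.
move=> t0 rl.
rewrite /Dv /density_graph /density -eS_T.
have -> : [set: 'I_t * 'I_l] = setX [set: 'I_t] [set: 'I_l].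
  by apply/setP => -[a b]; rewrite !inE.
rewrite eS_U // prevs_sum_T.
by rewrite cardsX !cardsT !card_ord subn1.
Qed.

Lemma W_U t l r (I : {set 'I_t}) (i0 : 'I_t) : i0 \in I ->
  (2 <= l)%N -> (1 <= r <= l)%N -> (l < r * (r + 1))%N ->
  Dv t l r <= W r (setX I [set: 'I_l]).
Proof.
move=> i0I l2 /andP[r1 rl] lr.
have t0 : (0 < t)%N by apply: (leq_ltn_trans (leq0n i0)); exact: ltn_ord.
have kt : (1 <= #|I| <= t)%N.
  by rewrite card_gt0 -[X in (_ <= X)%N](card_ord t) max_card andbT; apply/set0Pn; exists i0.
rewrite /W eS_U // cardsX cardsT card_ord.
apply: (num_ineq kt l2 _ _ (prevs_sum_le i0I) (Dv_E t0 rl)).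
- by rewrite sumA.
- have := sumB l r; have -> : (r - l = 0)%N by lia.
  rewrite mul0n addn0 => ->; lia.
Qed.

Local Open Scope ring_scope.

Lemma main_bound t l r : (2 <= t)%N -> (2 <= l)%N -> (1 <= r <= l)%N ->
  (l < r * (r + 1))%N ->
  forall S : {set 'I_t * 'I_l}, S != set0 -> Dv t l r <= W r S.
Proof.
move=> t2 l2 rr lr.
have l0 : (0 < l)%N by apply: leq_trans l2.
have t0 : (0 < t)%N by apply: leq_trans t2.
pose o0 : 'I_l := Ordinal l0.
pose x0 : 'I_t * 'I_l := (Ordinal t0, o0).
pose P := fun S : {set 'I_t * 'I_l} => S != set0.
have PT : P [set: 'I_t * 'I_l] by apply/set0Pn; exists x0; rewrite inE.
case: (arg_minP (W r) PT) => S1 S1P S1min.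
pose P2 := fun S : {set 'I_t * 'I_l} => (S != set0) && (W r S == W r S1).
have P2S1 : P2 S1 by rewrite /P2 eqxx andbT; exact: S1P.
case: (@arg_maxnP _ S1 P2 (fun S => #|S|) P2S1) => S2 /andP[S2n /eqP S2W] S2max.
suff HS2 : Dv t l r <= W r S2.
  move=> S Sn; apply: (le_trans HS2); rewrite S2W; exact: S1min.
have : (0 < #|S2|)%N by rewrite card_gt0.
case: (eqVneq #|S2| 1%N) => [/eqP/cards1P[x ->] _ | c1 c0].
  have -> : [set x] = x |: set0 by rewrite setU0.
  rewrite W_add ?inE // /W cards0 eS0 /=.
  have -> : nb r set0 x = set0 by apply/setP => u; rewrite !inE.
  by rewrite cards0 !mulr0 !subr0 add0r.
have c2 : (1 < #|S2|)%N by lia.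
have key : forall z' z, z' \in S2 -> z \notin S2 -> val z.1 = val z'.1 ->
    (val z.2).+1 = val z'.2 \/ (val z'.2).+1 = val z.2 -> False.
  move=> z' z z'S zS e1 hp.
  have h1 : W r S2 < W r (z |: S2).
    have : W r S1 <= W r (z |: S2).
      by apply: S1min; apply/set0Pn; exists z; rewrite !inE eqxx.
    rewrite le_eqVlt => /orP[/eqP e|]; last by rewrite S2W.
    have : P2 (z |: S2).
      rewrite /P2 -e eqxx andbT; apply/set0Pn; exists z; rewrite !inE eqxx //.
    move/S2max; rewrite cardsU1 zS /= add1n ltnn //.
  have h2 : W r S2 <= W r (S2 :\ z').
    rewrite S2W; apply: S1min; apply/set0Pn.
    have : (0 < #|S2 :\ z'|)%N by move: c2; rewrite (cardsD1 z') z'S add1n ltnS.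
    by rewrite card_gt0 => /set0Pn.
  have z'n : z' \notin S2 :\ z' by rewrite !inE eqxx.
  move: h1; rewrite W_add // => h1.
  move: h2; rewrite -{1}(setD1K z'S) W_add // => h2.
  have := @nb_shift _ _ r S2 z z' z'S zS e1 hp; rewrite -(ler_nat rat) => h3.
  lra.
pose I := [set i | (i, o0) \in S2].
have S2E : S2 = setX I [set: 'I_l].
  apply/setP => -[i p]; rewrite !inE andbT.
  suff H : forall n (h : (n < l)%N), ((i, Ordinal h) \in S2) = ((i, o0) \in S2).
    by have := H _ (ltn_ord p); have -> : Ordinal (ltn_ord p) = p by apply: val_inj.
  elim=> [|n IH] h; first by have -> : Ordinal h = o0 by apply: val_inj.
  have h' : (n < l)%N by apply: ltnW.
  rewrite -(IH h'); apply/idP/idP => H1; apply/negPn/negP => H2.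
  - exact: (key _ _ H1 H2 erefl (or_introl erefl)).
  - exact: (key _ _ H1 H2 erefl (or_intror erefl)).
have [x xS] := set0Pn _ S2n.
have xI : x.1 \in I by move: xS; rewrite S2E inE => /andP[].
by rewrite S2E; apply: W_U xI l2 rr lr.
Qed.

Local Close Scope ring_scope.

Lemma density_le t l r : (2 <= t)%N -> (2 <= l)%N -> (1 <= r <= l)%N ->
  (l < r * (r + 1))%N -> forall (S : {set 'I_t * 'I_l}) F,
  is_subgraph (braid_adj l r t) S F -> (1 < #|S|)%N ->
  (density S F <= density_graph (braid_adj l r t))%R.
Proof.
move=> t2 l2 rr lr S F /andP[Fsub /forallP Fin] c1.
have Sn : S != set0 by rewrite -card_gt0; apply: ltnW.
have := main_bound t2 l2 rr lr Sn; rewrite /W -/(Dv t l r) => h.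
have hF : (#|F| <= eS r S)%N.
  apply: subset_leq_card; apply/subsetP => e eF; rewrite inE (subsetP Fsub _ eF) /=.
  by have := Fin e; rewrite eF.
rewrite -(ler_nat rat) in hF.
rewrite /density -/(Dv t l r).
have pos : (0 < (#|S|.-1)%:R :> rat)%R by rewrite ltr0n; lia.
rewrite ler_pdivrMr //.
have -> : ((#|S|.-1)%:R = #|S|%:R - 1 :> rat)%R by rewrite -subn1 natrB //; lia.
lra.
Qed.

Theorem proposition4p3 (t l r : nat) :
  (2 <= t)%N -> (2 <= l)%N -> (1 <= r <= l)%N -> (l < r * (r + 1))%N ->
  max_density (braid_adj l r t) = density_graph (braid_adj l r t).
Proof.
move=> t2 l2 rr lr.
have l0 : (0 < l)%N by apply: leq_trans l2.
have t0 : (0 < t)%N by apply: leq_trans t2.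
have H0 : is_subgraph (braid_adj l r t) [set: 'I_t * 'I_l] (edges (braid_adj l r t))
          && (1 < #|[set: 'I_t * 'I_l]|)%N.
  rewrite /is_subgraph subxx /= cardsT card_prod !card_ord.
  apply/andP; split; last by nia.
  by apply/forallP => e; apply/implyP => _; apply: subsetT.
have dpos : (0 <= density_graph (braid_adj l r t))%R.
  by rewrite /density_graph /density; apply: divr_ge0.
rewrite /max_density (bigD1 (_, _) H0) /=.
rewrite max_l //.
apply: (big_ind (fun x => x <= density_graph (braid_adj l r t))%R) => //.
  by move=> x y hx hy; rewrite ge_max hx hy.
move=> [S F] /andP[/andP[hS hc] _] /=.
exact: density_le.
Qed.
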